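(* Let $\tau>1$, let $\kappa\ge3$ be an integer and let $x^\dagger\in\mathcal X$ satisfy $\bar k^\delta_{\mathrm{pr}}(x^\dagger)\ge\kappa$. Then on the event $\Omega_\kappa$ one has $k^\delta_{\mathrm{pr}}(x^\dagger)-1\ge\kappa/3$.
   Context: Setting: $K:\mathcal X\to\mathcal Y$ compact injective with dense range between infinite-dimensional real separable Hilbert spaces, singular system $(\sigma_j,v_j,u_j)$ ($(v_j),(u_j)$ orthonormal bases, $\sigma_1\ge\sigma_2\ge\dots>0$, $Kv_j=\sigma_ju_j$, $K^*u_j=\sigma_jv_j$); $y^\dagger=Kx^\dagger$, $\delta>0$, data $(y^\delta,u_j):=(y^\dagger,u_j)+\delta(Z,u_j)$ with real random variables $(Z,u_j)$. With $\min\emptyset=\infty$: $k^\delta_{\mathrm{pr}}(x^\dagger):=\min\{k\in\mathbb N_0:\sum_{j=1}^k(y^\delta-y^\dagger,u_j)^2\ge\sum_{j=k+1}^\infty(y^\dagger,u_j)^2\}$, $\bar k^\delta_{\mathrm{pr}}(x^\dagger):=\min\{k\in\mathbb N_0:\delta^2k\ge\sum_{j=k+1}^\infty(y^\dagger,u_j)^2\}$. With $\varepsilon_\tau:=\min\big(\frac{(\tau+1)^2}{4}-1,\frac13\big)$, define the event $$\Omega_\kappa:=\Big\{\Big|\sum_{j=1}^m(y^\delta-y^\dagger,u_j)^2-m\delta^2\Big|\le\varepsilon_\tau m\delta^2\ \text{for all integers } m\ge\kappa/3\Big\}.$$ *)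

(* Defs.v *)
From mathcomp Require Import all_boot all_order all_algebra.
From mathcomp Require Import all_classical all_reals all_analysis.
Set Implicit Arguments. Unset Strict Implicit. Unset Printing Implicit Defensive.
Import Order.TTheory GRing.Theory Num.Theory.
Local Open Scope ring_scope.
Local Open Scope classical_set_scope.

(* Indices are 0-based: index j here corresponds to index j+1 in the paper. *)
Section Defs.
Context {R : realType}.

(* sum_{j > k} a_j^2  (paper indexing), as an extended real (possibly +oo). *)
Definition tail_sq (a : nat -> R) (k : nat) : \bar R :=
  (\sum_(k <= j <oo) ((a j) ^+ 2)%:E)%E.

Definition head_sq (e : nat -> R) (k : nat) : R :=
  \sum_(0 <= j < k) (e j) ^+ 2.

(* k_pr = min { k : sum_{j<=k} (y^delta - y^dagger, u_j)^2 >= sum_{j>k} (y^dagger,u_j)^2 },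
   min of the empty set = +oo. a j = (y^dagger,u_j), e j = (y^delta - y^dagger, u_j). *)
Definition k_pr (a e : nat -> R) : \bar R :=
  ereal_inf [set (k%:R)%:E | k in [set k : nat | (tail_sq a k <= (head_sq e k)%:E)%E]].

Definition kbar_pr (delta : R) (a : nat -> R) : \bar R :=
  ereal_inf [set (k%:R)%:E | k in [set k : nat | (tail_sq a k <= (delta ^+ 2 * k%:R)%:E)%E]].

Definition eps_tau (tau : R) : R := Num.min (((tau + 1) ^+ 2) / 4 - 1) (3^-1).

(* The event Omega_kappa, for noise coefficients e w j = (y^delta - y^dagger, u_j)(w). *)
Definition Omega_kappa {Omega : Type} (tau delta : R) (kappa : nat)
    (e : Omega -> nat -> R) : set Omega :=
  [set w | forall m : nat, (kappa%:R / 3 : R) <= m%:R ->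
     `| head_sq (e w) m - m%:R * delta ^+ 2 | <= eps_tau tau * m%:R * delta ^+ 2].

End Defs.

(* Main.v *)
Require Import Defs.
From mathcomp Require Import all_boot all_order all_algebra.
From mathcomp Require Import all_classical all_reals all_analysis.
From mathcomp Require Import zify ring lra.
Import numFieldNormedType.Exports.
Import Order.TTheory GRing.Theory Num.Theory.
Local Open Scope ring_scope.
Local Open Scope classical_set_scope.

Lemma tail_mono (R : realType) (a : nat -> R) k l : (k <= l)%N ->
  (tail_sq a l <= tail_sq a k)%E.
Proof.
move=> kl; rewrite /tail_sq (@nneseries_split R _ k (l - k)); last first.
  by move=> j _; rewrite lee_fin sqr_ge0.
rewrite subnKC //; apply: lee_paddl => //.
by apply: sume_ge0 => j _; rewrite lee_fin sqr_ge0.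
Qed.

Lemma head_mono (R : realType) (e : nat -> R) k l : (k <= l)%N ->
  head_sq e k <= head_sq e l.
Proof.
move=> kl; rewrite /head_sq (@big_cat_nat _ _ _ k 0 l _ _ (leq0n k) kl) /= lerDl.
by apply: sumr_ge0 => j _; rewrite sqr_ge0.
Qed.

Theorem mainTheorem10 (R : realType) (sigma xc : nat -> R) (Omega : Type)
    (Z : Omega -> nat -> R) (tau delta : R) (kappa : nat) :
  (forall j, 0 < sigma j) ->
  (forall i j, (i <= j)%N -> sigma j <= sigma i) ->
  (sigma n @[n --> \oo] --> (0 : R)) ->
  (\sum_(0 <= j <oo) ((xc j) ^+ 2)%:E < +oo)%E ->
  0 < delta ->
  1 < tau ->
  (3 <= kappa)%N ->
  ((kappa%:R)%:E <= kbar_pr delta (fun j => (sigma j * xc j)%R))%E ->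
  forall w : Omega,
    Omega_kappa tau delta kappa (fun w j => (delta * Z w j)%R) w ->
    (((kappa%:R / 3)%R)%:E <= k_pr (fun j => (sigma j * xc j)%R) (fun j => (delta * Z w j)%R) - 1%:E)%E.
Proof.
move=> _ _ _ _ dpos _ k3 hk w Hw.
set a := (fun j => (sigma j * xc j)%R) in hk *.
set e := (fun j => (delta * Z w j)%R) in Hw *.
rewrite leeBrDr // -EFinD; apply: le_ereal_inf_tmp => _ [k /= Hk <-].
rewrite lee_fin leNgt; apply/negP => Hlt.
set m := ((kappa + 2) %/ 3)%N.
have k3' : (k * 3 < kappa + 3)%N.
  by rewrite -(ltr_nat R) natrM natrD; lra.
have km : (k <= m)%N by rewrite /m; lia.
have m1 : (kappa <= 3 * m)%N by rewrite /m; lia.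
have m2 : (4 * m <= 3 * (kappa - 1))%N by rewrite /m; lia.
have mk1 : (m <= kappa - 1)%N by lia.
have Ht : ((delta ^+ 2 * (kappa - 1)%:R)%:E < tail_sq a (kappa - 1))%E.
  rewrite ltNge; apply/negP => H.
  have := le_trans hk (ereal_inf_lbound (ex_intro2 _ _ (kappa - 1)%N H erefl)).
  rewrite lee_fin ler_nat; lia.
have Hm := Hw m.
have Hm' : kappa%:R / 3 <= m%:R :> R.
  have : (kappa%:R <= (3 * m)%:R :> R) by rewrite ler_nat.
  rewrite natrM; lra.
have {}Hm := Hm Hm'.
have eps13 : eps_tau tau <= 3^-1 by rewrite /eps_tau ge_min lexx orbT.
have hm : head_sq e m <= delta ^+ 2 * (kappa - 1)%:R.
  have d2 : 0 <= delta ^+ 2 by rewrite sqr_ge0.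
  have Hn := ler_norm (head_sq e m - m%:R * delta ^+ 2).
  have H4 : (4 * m)%:R * delta ^+ 2 <= (3 * (kappa - 1))%:R * delta ^+ 2.
    by rewrite ler_wpM2r // ler_nat.
  have He : eps_tau tau * m%:R * delta ^+ 2 <= 3^-1 * (m%:R * delta ^+ 2).
    by rewrite -mulrA ler_wpM2r // mulr_ge0.
  have {}H4 : 4 * (m%:R * delta ^+ 2) <= 3 * ((kappa - 1)%:R * delta ^+ 2).
    by move: H4; rewrite !natrM -!mulrA.
  rewrite [X in _ <= X]mulrC.
  move: Hm Hn He H4.
  rewrite /e.
  set X := m%:R * delta ^+ 2; set Y := (kappa - 1)%:R * delta ^+ 2.
  set H := head_sq _ m; set E := eps_tau tau * m%:R * delta ^+ 2.
  move=> *; lra.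
have Hh : ((head_sq e k)%:E <= (delta ^+ 2 * (kappa - 1)%:R)%R%:E)%E.
  by rewrite lee_fin; exact: le_trans (@head_mono R e _ _ km) hm.
have := @le_trans _ _ _ _ _ Hk Hh.
have := @tail_mono R a _ _ (leq_trans km mk1).
move=> H1 H2; have := lt_le_trans Ht (le_trans H1 H2).
by rewrite ltxx.
Qed.
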